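(* Let $\{\mathcal N,\gamma,\boldsymbol\ell,\ell^{(2)},\mathbf Y\}$ be null hypersurface data, $z$ a nowhere-zero function and $V$ a vector field on $\mathcal N$, and set $\mathbf w=\gamma(V,\cdot)$. Then $$\mathcal G_{(z,V)}(\mathbf U)=\tfrac1z\mathbf U,\qquad \mathcal G_{(z,V)}(\mathbf F)=z(\mathbf F+\tfrac12d\mathbf w)+\tfrac12dz\wedge(\boldsymbol\ell+\mathbf w),$$ $$\mathcal G_{(z,V)}(\mathbf s)=\mathbf s+\tfrac12\pounds_n\mathbf w+\tfrac{n(z)}{2z}(\boldsymbol\ell+\mathbf w)-\tfrac1{2z}dz,$$ $$\mathcal G_{(z,V)}(\mathbf r)=\mathbf r+\tfrac1{2z}dz+\tfrac{n(z)}{2z}(\boldsymbol\ell+\mathbf w)+\tfrac12\pounds_n\mathbf w-\mathbf U(V,\cdot),\qquad \mathcal G_{(z,V)}(\kappa_n)=\tfrac1z\Big(\kappa_n-\tfrac{n(z)}z\Big).$$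
   Context: Metric hypersurface data $\{\mathcal N,\gamma,\boldsymbol\ell,\ell^{(2)}\}$: $\mathcal N$ smooth manifold, $\gamma$ symmetric $2$-covariant, $\boldsymbol\ell$ a one-form, $\ell^{(2)}$ a function, such that $\boldsymbol{\mathcal A}|_p((W,a),(Z,b))=\gamma(W,Z)+a\boldsymbol\ell(Z)+b\boldsymbol\ell(W)+ab\ell^{(2)}$ is non-degenerate; its inverse $\mathcal A((\boldsymbol\alpha,a),(\boldsymbol\beta,b))=P(\boldsymbol\alpha,\boldsymbol\beta)+a\,n(\boldsymbol\beta)+b\,n(\boldsymbol\alpha)+ab\,n^{(2)}$ defines $P,n,n^{(2)}$. Null means $n^{(2)}=0$ (then $\gamma(n,\cdot)=0$, $\boldsymbol\ell(n)=1$). $\mathbf F=\frac12d\boldsymbol\ell$, $\mathbf s=\mathbf F(n,\cdot)$ (contraction in the first slot), $\mathbf U=\frac12\pounds_n\gamma$. Hypersurface data adds a symmetric $2$-covariant $\mathbf Y$; $\mathbf r=\mathbf Y(n,\cdot)$, $\kappa_n=-\mathbf Y(n,n)$. Gauge transformation $\mathcal G_{(z,V)}$: $\gamma\mapsto\gamma$, $\boldsymbol\ell\mapsto z(\boldsymbol\ell+\gamma(V,\cdot))$, $\ell^{(2)}\mapsto z^2(\ell^{(2)}+2\boldsymbol\ell(V)+\gamma(V,V))$, $\mathbf Y\mapsto z\mathbf Y+\boldsymbol\ell\otimes_sdz+\frac12\pounds_{zV}\gamma$ ($A\otimes_sB=\frac12(A\otimes B+B\otimes A)$); the transform of a derived quantity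 is that quantity computed from the transformed data (in the null case $n\mapsto z^{-1}n$). *)

(* Defs.v *)
(* Local (coordinate) formulation: the manifold N is modelled by an open
   subset Uo of R^m = 'rV[R]_m (a chart domain); tensor fields are given by
   their component functions in the coordinate frame d/dx^i. *)
From HB Require Import structures.
From mathcomp Require Import all_boot all_order all_algebra.
From mathcomp Require Import all_classical all_reals all_analysis.
Set Implicit Arguments. Unset Strict Implicit. Unset Printing Implicit Defensive.
Import Order.TTheory GRing.Theory Num.Theory.
Import numFieldNormedType.Exports.
Local Open Scope ring_scope.
Local Open Scope classical_set_scope.

Section HypData.
Variables (R : realType) (m : nat).

Notation pt := 'rV[R]_m.

Definition ecoord (k : 'I_m) : pt := delta_mx 0 k.

Definition pd (k : 'I_m) (f : pt -> R) : pt -> R := fun x => 'D_(ecoord k) f x.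

Fixpoint Ck (Uo : set pt) (k : nat) (f : pt -> R) : Prop :=
  (forall x, Uo x -> {for x, continuous f}) /\
  match k with
  | 0 => True
  | k'.+1 => forall i : 'I_m, (forall x, Uo x -> derivable f x (ecoord i)) /\ Ck Uo k' (pd i f)
  end.

Definition smooth_on (Uo : set pt) (f : pt -> R) : Prop := forall k, Ck Uo k f.

(* ---- tensor calculus in coordinates ----
   one-forms and vector fields: row vectors of components ('rV_m);
   2-covariant tensors: matrices T with T i j = T(d_i, d_j). *)

Definition dfun (f : pt -> R) (x : pt) : 'rV[R]_m := \row_i pd i f x.

Definition vact (X : pt -> 'rV[R]_m) (f : pt -> R) (x : pt) : R :=
  \sum_k X x 0 k * pd k f x.

Definition dform (a : pt -> 'rV[R]_m) (x : pt) : 'M[R]_m :=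
  \matrix_(i, j) (pd i (fun y => a y 0 j) x - pd j (fun y => a y 0 i) x).

Definition wedge (a b : 'rV[R]_m) : 'M[R]_m :=
  \matrix_(i, j) (a 0 i * b 0 j - a 0 j * b 0 i).

Definition symtens (a b : 'rV[R]_m) : 'M[R]_m :=
  2^-1 *: (a^T *m b + b^T *m a).

Definition lie1 (X a : pt -> 'rV[R]_m) (x : pt) : 'rV[R]_m :=
  \row_i \sum_k (X x 0 k * pd k (fun y => a y 0 i) x
                 + a x 0 k * pd i (fun y => X y 0 k) x).

Definition lie2 (X : pt -> 'rV[R]_m) (g : pt -> 'M[R]_m) (x : pt) : 'M[R]_m :=
  \matrix_(i, j) \sum_k (X x 0 k * pd k (fun y => g y i j) x
                         + g x k j * pd i (fun y => X y 0 k) x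
                         + g x i k * pd j (fun y => X y 0 k) x).

(* the matrix of the form A on T_pN x R, in the frame (d_1..d_m, (0,1)) *)
Definition Amat (g : 'M[R]_m) (l : 'rV[R]_m) (l2 : R) : 'M[R]_(m + 1) :=
  block_mx g l^T l l2%:M.

(* components of the inverse: n^i and n^(2) *)
Definition nvec (g : 'M[R]_m) (l : 'rV[R]_m) (l2 : R) : 'rV[R]_m :=
  \row_i (invmx (Amat g l l2)) (lshift 1 i) (rshift m ord0).
Definition n2val (g : 'M[R]_m) (l : 'rV[R]_m) (l2 : R) : R :=
  (invmx (Amat g l l2)) (rshift m ord0) (rshift m ord0).

Definition nfield (g : pt -> 'M[R]_m) (l : pt -> 'rV[R]_m) (l2 : pt -> R) : pt -> 'rV[R]_m :=
  fun x => nvec (g x) (l x) (l2 x).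
Definition n2field (g : pt -> 'M[R]_m) (l : pt -> 'rV[R]_m) (l2 : pt -> R) : pt -> R :=
  fun x => n2val (g x) (l x) (l2 x).

Definition Ften (l : pt -> 'rV[R]_m) (x : pt) : 'M[R]_m := 2^-1 *: dform l x.
Definition sform g l l2 (x : pt) : 'rV[R]_m := nfield g l l2 x *m Ften l x.
Definition Uten g l l2 (x : pt) : 'M[R]_m := 2^-1 *: lie2 (nfield g l l2) g x.
Definition rform g l l2 (Y : pt -> 'M[R]_m) (x : pt) : 'rV[R]_m := nfield g l l2 x *m Y x.
Definition kappan g l l2 (Y : pt -> 'M[R]_m) (x : pt) : R :=
  - (nfield g l l2 x *m Y x *m (nfield g l l2 x)^T) 0 0.

Definition gauge_ell (z : pt -> R) (V : pt -> 'rV[R]_m) (g : pt -> 'M[R]_m)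
  (l : pt -> 'rV[R]_m) : pt -> 'rV[R]_m :=
  fun x => z x *: (l x + V x *m g x).
Definition gauge_ell2 (z : pt -> R) (V : pt -> 'rV[R]_m) (g : pt -> 'M[R]_m)
  (l : pt -> 'rV[R]_m) (l2 : pt -> R) : pt -> R :=
  fun x => z x ^+ 2 * (l2 x + 2 * (l x *m (V x)^T) 0 0 + (V x *m g x *m (V x)^T) 0 0).
Definition gauge_Y (z : pt -> R) (V : pt -> 'rV[R]_m) (g : pt -> 'M[R]_m)
  (l : pt -> 'rV[R]_m) (Y : pt -> 'M[R]_m) : pt -> 'M[R]_m :=
  fun x => z x *: Y x + symtens (l x) (dfun z x)
           + 2^-1 *: lie2 (fun y => z y *: V y) g x.

End HypData.

(* Main.v *)
Require Import Defs.
From HB Require Import structures.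
From mathcomp Require Import all_boot all_order all_algebra.
From mathcomp Require Import all_classical all_reals all_analysis.
From mathcomp Require Import ring.
Import Order.TTheory GRing.Theory Num.Theory.
Import numFieldNormedType.Exports.
Local Open Scope ring_scope.
Local Open Scope classical_set_scope.

Section Alg.
Variables (R : realType) (m : nat).

Lemma Amat_mul_entry (g : 'M[R]_m) l l2 (B : 'M[R]_(m+1)) (i : 'I_(m+1)) c :
  (Amat g l l2 *m B) i c = \sum_(k < m) Amat g l l2 i (lshift 1 k) * B (lshift 1 k) c
     + Amat g l l2 i (rshift m ord0) * B (rshift m ord0) c.
Proof. by rewrite mxE big_split_ord /= big_ord1. Qed.

Lemma inv_facts (g : 'M[R]_m) l l2 :
  g^T = g -> Amat g l l2 \in unitmx -> n2val g l l2 = 0 ->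
  (forall j, \sum_k nvec g l l2 0 k * g k j = 0) /\
  \sum_k l 0 k * nvec g l l2 0 k = 1.
Proof.
move=> gs uA n20.
have /matrixP H := mulmxV uA.
split.
- move=> j.
  have := H (lshift 1 j) (rshift m ord0).
  rewrite /= Amat_mul_entry.
  have -> : invmx (Amat g l l2) (rshift m ord0) (rshift m ord0) = 0 by exact: n20.
  rewrite [X in _ = X -> _]mxE eq_lrshift mulr0n.
  rewrite mulr0 addr0 => E; apply: (etrans _ E).
  apply: eq_bigr => k _.
  rewrite /Amat block_mxEul /nvec mxE mulrC.
  by rewrite -{1}gs mxE.
- have := H (rshift m ord0) (rshift m ord0).
  rewrite /= Amat_mul_entry.
  have -> : invmx (Amat g l l2) (rshift m ord0) (rshift m ord0) = 0 by exact: n20.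
  rewrite [X in _ = X -> _]mxE eqxx mulr1n.
  rewrite mulr0 addr0 => E; apply: (etrans _ E).
  apply: eq_bigr => k _.
  by rewrite /Amat block_mxEdl /nvec mxE.
Qed.
Lemma trZ p q (a : R) (A : 'M[R]_(p, q)) : (a *: A)^T = a *: A^T.
Proof. by apply/matrixP => i j; rewrite !mxE. Qed.

Lemma gaugeA (g : 'M[R]_m) l l2 (zz : R) (V : 'rV_m) :
  g^T = g ->
  let D := block_mx 1%:M (zz *: V^T) 0 (@scalar_mx _ 1 zz) in
  D^T *m Amat g l l2 *m D = Amat g (zz *: (l + V *m g))
     (zz ^+ 2 * (l2 + 2 * (l *m V^T) 0 0 + (V *m g *m V^T) 0 0)).
Proof.
move=> gs D.
rewrite /D /Amat tr_block_mx !mulmx_block.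
rewrite !trmx1 !trmx0 !mul1mx !mul0mx !mulmx1 !mulmx0 ?addr0 ?add0r ?tr_scalar_mx.
congr block_mx.
- by rewrite -scalemxAr mul_mx_scalar !linearZ /= linearD /= trmx_mul gs scalerDr addrC.
- by rewrite trZ trmxK -scalemxAl mul_scalar_mx scalerDr addrC.
rewrite trZ trmxK -scalemxAl mul_scalar_mx -scalerDr.
rewrite -!scalemxAl -!scalemxAr mulmxDl -scalar_mxM !mul_mx_scalar mulmxDl.
have ea : (V *m l^T) 0 0 = (l *m V^T) 0 0.
  by rewrite -[V *m l^T]trmxK trmx_mul trmxK mxE.
move: (V *m g *m V^T) (l *m V^T) (V *m l^T) ea => B A C ea.
apply/matrixP => i j; rewrite !ord1 !mxE /= ea.
ring.
Qed.

Lemma inv_factsM (g : 'M[R]_m) l l2 :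
  g^T = g -> Amat g l l2 \in unitmx -> n2val g l l2 = 0 ->
  nvec g l l2 *m g = 0 /\ l *m (nvec g l l2)^T = 1.
Proof.
move=> gs uA n20; have [h1 h2] := inv_facts g l l2 gs uA n20; split.
  by apply/matrixP => i j; rewrite ord1 !mxE h1.
by apply/matrixP => i j; rewrite !ord1 !mxE -h2 mulr1n; apply: eq_bigr => k _; rewrite mxE.
Qed.

Lemma gauge_inv (g : 'M[R]_m) l l2 (zz : R) (V : 'rV_m) :
  g^T = g -> Amat g l l2 \in unitmx -> n2val g l l2 = 0 -> zz != 0 ->
  Amat g (zz *: (l + V *m g)) (zz ^+ 2 * (l2 + 2 * (l *m V^T) 0 0 + (V *m g *m V^T) 0 0)) \in unitmx /\
  nvec g (zz *: (l + V *m g)) (zz ^+ 2 * (l2 + 2 * (l *m V^T) 0 0 + (V *m g *m V^T) 0 0))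
   = zz^-1 *: nvec g l l2.
Proof.
move=> gs uA n20 z0.
set l' := zz *: (l + V *m g).
set l2' := zz ^+ 2 * _.
have uA' : Amat g l' l2' \in unitmx.
  rewrite -(gaugeA g l l2 zz V gs) !unitmx_mul unitmx_tr uA andbT.
  by rewrite unitmxE det_ublock det1 det_scalar expr1 mul1r unitfE z0.
split => //.
have [h1 h2] := inv_factsM g l l2 gs uA n20.
set n := nvec g l l2.
pose c := col_mx (zz^-1 *: n^T) (0 : 'cV[R]_1).
have Ac : Amat g l' l2' *m c = col_mx 0 1.
  rewrite /Amat /c mul_block_col !mulmx0 !addr0; congr col_mx.
    by rewrite -scalemxAr -[g]gs -trmx_mul h1 trmx0 scaler0.
  rewrite /l' -scalemxAr -scalemxAl scalerA mulVf // scale1r mulmxDl h2.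
  by rewrite -mulmxA -[g]gs -trmx_mul h1 trmx0 mulmx0 addr0.
have cE : c = invmx (Amat g l' l2') *m col_mx 0 1 by rewrite -Ac mulKmx.
apply/rowP => i.
move/matrixP: cE => cE; have := cE (lshift 1 i) 0.
rewrite /c col_mxEu !mxE big_split_ord /= big1 ?add0r; last by move=> k _; rewrite col_mxEu mxE mulr0.
rewrite big_ord1 col_mxEd mxE mulr1 => E.
by rewrite /n /nvec E.
Qed.
End Alg.

Definition dvb {R : realType} {m : nat} (x : 'rV[R]_m) (f : 'rV[R]_m -> R) :=
  forall k : 'I_m, derivable f x (ecoord R k).

Section Calc.
Context {R : realType} {m : nat} {x : 'rV[R]_m}.
Notation pt := 'rV[R]_m.
Local Notation dvb := (dvb x).

Lemma pdD (f g : pt -> R) k : dvb f -> dvb g -> pd k (fun y => f y + g y) x = pd k f x + pd k g x.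
Proof. move=> df dg; rewrite /pd; exact: deriveD. Qed.
Lemma pdM (f g : pt -> R) k : dvb f -> dvb g -> pd k (fun y => f y * g y) x = f x * pd k g x + g x * pd k f x.
Proof. move=> df dg; rewrite /pd; exact: deriveM. Qed.
Lemma pdV (f : pt -> R) k : f x != 0 -> dvb f -> pd k (fun y => (f y)^-1) x = - (f x)^-2 * pd k f x.
Proof. move=> f0 df; rewrite /pd; exact: deriveV. Qed.
Lemma pdC (c : R) k : pd k (fun _ => c) x = 0.
Proof. rewrite /pd; exact: (derive_cst c). Qed.
Lemma dvbD (f g : pt -> R) : dvb f -> dvb g -> dvb (fun y => f y + g y).
Proof. move=> df dg k; exact: derivableD. Qed.
Lemma dvbM (f g : pt -> R) : dvb f -> dvb g -> dvb (fun y => f y * g y).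
Proof. move=> df dg k; exact: derivableM. Qed.
Lemma dvbV (f : pt -> R) : f x != 0 -> dvb f -> dvb (fun y => (f y)^-1).
Proof. move=> f0 df k; exact: derivableV. Qed.
Lemma dvbC (c : R) : dvb (fun _ => c).
Proof. move=> k; exact: (derivable_cst c). Qed.

Lemma pd_near (f g : pt -> R) k : (\forall y \near x, f y = g y) -> pd k f x = pd k g x.
Proof. by move=> fg; rewrite /pd; apply: near_eq_derive. Qed.
Lemma dvb_near (f g : pt -> R) : (\forall y \near x, f y = g y) -> dvb f -> dvb g.
Proof. by move=> fg df k; apply: near_eq_derivable (df k); exact: fg. Qed.

Lemma dvb_sum (I : Type) (r : seq I) (P : pred I) (F : I -> pt -> R) :
  (forall i, dvb (F i)) -> dvb (fun y => \sum_(i <- r | P i) F i y).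
Proof.
move=> dF; elim: r => [|a r IH].
  by under eq_fun do rewrite big_nil; exact: dvbC.
have -> : (fun y => \sum_(i <- a :: r | P i) F i y) =
  (fun y => (if P a then F a y else 0) + \sum_(i <- r | P i) F i y).
  by apply: funext => y; rewrite big_cons; case: (P a) => //; rewrite add0r.
apply: dvbD; last exact: IH.
by case: (P a); [exact: dF | exact: dvbC].
Qed.

Lemma pd_sum (I : Type) (r : seq I) (P : pred I) (F : I -> pt -> R) k :
  (forall i, dvb (F i)) ->
  pd k (fun y => \sum_(i <- r | P i) F i y) x = \sum_(i <- r | P i) pd k (F i) x.
Proof.
move=> dF; elim: r => [|a r IH].
  by under eq_fun do rewrite big_nil; rewrite big_nil pdC.
have -> : (fun y => \sum_(i <- a :: r | P i) F i y) =
  (fun y => (if P a then F a y else 0) + \sum_(i <- r | P i) F i y).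
  by apply: funext => y; rewrite big_cons; case: (P a) => //; rewrite add0r.
rewrite pdD ?IH; last exact: dvb_sum.
  by rewrite big_cons; case: (P a) => //; rewrite pdC add0r.
by case: (P a) => //; exact: dvbC.
Qed.

Lemma dvb_prod (I : Type) (r : seq I) (P : pred I) (F : I -> pt -> R) :
  (forall i, dvb (F i)) -> dvb (fun y => \prod_(i <- r | P i) F i y).
Proof.
move=> dF; elim: r => [|a r IH].
  by under eq_fun do rewrite big_nil; exact: dvbC.
have -> : (fun y => \prod_(i <- a :: r | P i) F i y) =
  (fun y => (if P a then F a y else 1) * \prod_(i <- r | P i) F i y).
  by apply: funext => y; rewrite big_cons; case: (P a) => //; rewrite mul1r.
apply: dvbM; last exact: IH.
by case: (P a); [exact: dF | exact: dvbC].
Qed.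

Lemma dvb_det p (M : pt -> 'M[R]_p) :
  (forall i j, dvb (fun y => M y i j)) -> dvb (fun y => \det (M y)).
Proof.
move=> dM; rewrite /determinant.
apply: dvb_sum => s; apply: dvbM; first exact: dvbC.
by apply: dvb_prod => i; exact: dM.
Qed.

Lemma dvb_inv_entry p (M : pt -> 'M[R]_p) (Uo : set pt) i j :
  open Uo -> Uo x -> (forall y, Uo y -> M y \in unitmx) ->
  (forall i j, dvb (fun y => M y i j)) -> dvb (fun y => invmx (M y) i j).
Proof.
move=> oU Ux uM dM.
have nb : \forall y \near x, Uo y by apply: open_nbhs_nbhs; split.
apply: (@dvb_near (fun y => (\det (M y))^-1 * ((-1) ^+ (j + i) * \det (row' j (col' i (M y)))))).
  apply: (filterS _ nb) => y Uy.
  by rewrite /invmx (uM y Uy) mxE /adjugate mxE /cofactor.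
apply: dvbM.
  apply: dvbV; last exact: dvb_det.
  by rewrite -unitfE -unitmxE; apply: uM.
apply: dvbM; first exact: dvbC.
by apply: dvb_det => a b; under eq_fun do rewrite !mxE; exact: dM.
Qed.
End Calc.
Arguments dvbD {R m x f g}.
Arguments dvbM {R m x f g}.
Arguments dvbV {R m x f}.

Ltac genat := repeat match goal with
 | |- context [pd ?k ?f ?y] => let A := fresh "A" in move: (pd k f y) => A
 | |- context [@bigop.body ?R ?I ?idx ?r ?F] => let S := fresh "S" in move: (@bigop.body R I idx r F) => S
 | |- context [@fun_of_matrix ?T ?a ?b ?M ?i ?j] => let S := fresh "E" in move: (@fun_of_matrix T a b M i j) => S
 end.

Section Main.
Variables (R : realType) (m : nat).
Notation pt := 'rV[R]_m.
Variables (gam : pt -> 'M[R]_m) (ell : pt -> 'rV[R]_m) (ell2 : pt -> R)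
  (Y : pt -> 'M[R]_m) (z : pt -> R) (V : pt -> 'rV[R]_m) (x : pt).
Notation n := (nfield gam ell ell2).
Notation ell' := (gauge_ell z V gam ell).
Notation ell2' := (gauge_ell2 z V gam ell ell2).
Notation Y' := (gauge_Y z V gam ell Y).
Notation n' := (nfield gam ell' ell2').
Notation w := (fun y => V y *m gam y).
Notation dg k i j := (pd k (fun y => gam y i j) x).
Notation dn i k := (pd i (fun y => n y 0 k) x).
Notation Z i := (pd i z x).

Hypothesis z0 : z x != 0.
Hypothesis gsx : forall i j, gam x i j = gam x j i.
Hypothesis dgs : forall k i j, dg k i j = dg k j i.
Hypothesis I1 : forall j, \sum_k n x 0 k * gam x k j = 0.
Hypothesis hn' : forall k, n' x 0 k = (z x)^-1 * n x 0 k.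
Hypothesis hdn' : forall i k, pd i (fun y => n' y 0 k) x =
   (z x)^-1 * dn i k + n x 0 k * (- (z x)^-2 * Z i).

Lemma sum3 (F A B C : 'I_m -> R) a b c :
  (forall k, F k = a * A k + b * B k + c * C k) ->
  \sum_k F k = a * \sum_k A k + b * \sum_k B k + c * \sum_k C k.
Proof.
move=> h; rewrite !mulr_sumr -!big_split; exact: eq_bigr.
Qed.

Lemma goalU : Uten gam ell' ell2' x = (z x)^-1 *: Uten gam ell ell2 x.
Proof.
apply/matrixP => i j; rewrite /Uten /lie2 !mxE.
rewrite [in LHS](@sum3 _ (fun k => n x 0 k * dg k i j + gam x k j * dn i k + gam x i k * dn j k)
   (fun k => n x 0 k * gam x k j) (fun k => n x 0 k * gam x k i)
   ((z x)^-1) (- (z x)^-2 * Z i) (- (z x)^-2 * Z j)).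
  rewrite !I1. move: (\sum_k _) (z x) => S q. ring.
move=> k /=; rewrite (gsx i k) hn' (hdn' i k) (hdn' j k).
move: (dg k i j) (dn i k) (dn j k) (Z i) (Z j) (n x 0 k) (gam x k j) (gam x k i) (z x) => A B C D E F G H Q; ring.
Qed.

Hypothesis dZ : dvb x z.
Hypothesis dL : forall j, dvb x (fun y => ell y 0 j).
Hypothesis dW : forall j, dvb x (fun y => (V y *m gam y) 0 j).

Lemma hdl' i j : pd i (fun y => ell' y 0 j) x =
  z x * (pd i (fun y => ell y 0 j) x + pd i (fun y => (V y *m gam y) 0 j) x)
  + (ell x 0 j + (V x *m gam x) 0 j) * Z i.
Proof.
have -> : (fun y => ell' y 0 j) = fun y => z y * (ell y 0 j + (V y *m gam y) 0 j).
  by apply: funext => y; rewrite /gauge_ell mxE [X in _ * X]mxE.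
rewrite (@pdM _ _ x z (fun y => ell y 0 j + (V y *m gam y) 0 j) i dZ (dvbD (dL j) (dW j))).
rewrite (@pdD _ _ x (fun y => ell y 0 j) (fun y => (V y *m gam y) 0 j) i (dL j) (dW j)).
by rewrite addrC mulrC.
Qed.

Lemma goalF : Ften ell' x = z x *: (Ften ell x + 2^-1 *: dform w x)
                      + 2^-1 *: wedge (dfun z x) (ell x + w x).
Proof.
apply/matrixP => i j; rewrite /Ften /dform /wedge /dfun !mxE; cbv beta.
rewrite !hdl' !mxE.
genat; ring.
Qed.

Lemma sum6 (F A1 A2 A3 A4 A5 A6 : 'I_m -> R) a1 a2 a3 a4 a5 a6 :
  (forall k, F k = a1 * A1 k + a2 * A2 k + a3 * A3 k + a4 * A4 k + a5 * A5 k + a6 * A6 k) ->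
  \sum_k F k = a1 * \sum_k A1 k + a2 * \sum_k A2 k + a3 * \sum_k A3 k
     + a4 * \sum_k A4 k + a5 * \sum_k A5 k + a6 * \sum_k A6 k.
Proof.
move=> h; rewrite !mulr_sumr -!big_split; exact: eq_bigr.
Qed.

Hypothesis I2 : \sum_k ell x 0 k * n x 0 k = 1.
Hypothesis I5 : \sum_k n x 0 k * (V x *m gam x) 0 k = 0.
Hypothesis I4 : forall j, \sum_k (V x *m gam x) 0 k * dn j k =
   - \sum_k n x 0 k * pd j (fun y => (V y *m gam y) 0 k) x.

Lemma hlie j : lie1 n w x 0 j = \sum_k n x 0 k * pd k (fun y => (V y *m gam y) 0 j) x
   - \sum_k n x 0 k * pd j (fun y => (V y *m gam y) 0 k) x.
Proof. by rewrite mxE big_split /= I4. Qed.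

Lemma goalS : sform gam ell' ell2' x = sform gam ell ell2 x + 2^-1 *: lie1 n w x
                      + (vact n z x / (2 * z x)) *: (ell x + w x)
                      - (2 * z x)^-1 *: dfun z x.
Proof.
rewrite /sform goalF; apply/rowP => j.
rewrite [in RHS]mxE [in RHS]mxE [in RHS]mxE [in RHS]mxE [in RHS]mxE hlie.
rewrite [in LHS]mxE.
rewrite [in LHS](@sum6 _ (fun i => n x 0 i * Ften ell x i j)
   (fun i => n x 0 i * pd i (fun y => (V y *m gam y) 0 j) x)
   (fun i => n x 0 i * pd j (fun y => (V y *m gam y) 0 i) x)
   (fun i => n x 0 i * Z i)
   (fun i => ell x 0 i * n x 0 i)
   (fun i => n x 0 i * (V x *m gam x) 0 i)
   1 (2^-1) (- 2^-1) ((2 * z x)^-1 * (ell x 0 j + (V x *m gam x) 0 j)) (- (2 * z x)^-1 * Z j)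
   (- (2 * z x)^-1 * Z j)).
  rewrite I2 I5 /vact !mxE.
  genat; ring.
move=> i /=; rewrite hn' !mxE; cbv beta.
move: (z x) z0 => q q0; genat; field; exact: q0.
Qed.

Hypothesis dVv : forall a, dvb x (fun y => V y 0 a).
Hypothesis dG : forall a b, dvb x (fun y => gam y a b).
Hypothesis I3 : forall k j, \sum_i n x 0 i * dg k i j = - \sum_i gam x i j * dn k i.

Notation dV i a := (pd i (fun y => V y 0 a) x).
Notation cV a := (\sum_k n x 0 k * dV k a).
Notation en k := (\sum_a V x 0 a * dn a k).

Lemma hdw k j : pd k (fun y => (V y *m gam y) 0 j) x =
  \sum_a (V x 0 a * dg k a j + gam x a j * dV k a).
Proof.
have -> : (fun y => (V y *m gam y) 0 j) = fun y => \sum_a V y 0 a * gam y a j.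
  by apply: funext => y; rewrite mxE.
rewrite (@pd_sum _ _ x _ (index_enum _) xpredT (fun a y => V y 0 a * gam y a j) k).
  apply: eq_bigr => a _.
  exact: (@pdM _ _ x (fun y => V y 0 a) (fun y => gam y a j) k (dVv a) (dG a j)).
by move=> a; exact: (dvbM (dVv a) (dG a j)).
Qed.

Lemma hdzV i k : pd i (fun y => (z y *: V y) 0 k) x = z x * dV i k + V x 0 k * Z i.
Proof.
have -> : (fun y => (z y *: V y) 0 k) = fun y => z y * V y 0 k.
  by apply: funext => y; rewrite mxE.
exact: (@pdM _ _ x z (fun y => V y 0 k) i dZ (dVv k)).
Qed.

Lemma sum4 (F A1 A2 A3 A4 : 'I_m -> R) a1 a2 a3 a4 :
  (forall k, F k = a1 * A1 k + a2 * A2 k + a3 * A3 k + a4 * A4 k) ->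
  \sum_k F k = a1 * \sum_k A1 k + a2 * \sum_k A2 k + a3 * \sum_k A3 k + a4 * \sum_k A4 k.
Proof.
move=> h; rewrite !mulr_sumr -!big_split; exact: eq_bigr.
Qed.

Lemma sum1 (F A : 'I_m -> R) c : (forall k, F k = c * A k) -> \sum_k F k = c * \sum_k A k.
Proof. by move=> h; rewrite mulr_sumr; exact: eq_bigr. Qed.

Lemma hNL j : \sum_i n x 0 i * lie2 (fun y => z y *: V y) gam x i j =
  z x * \sum_a gam x a j * cV a - z x * \sum_k gam x k j * en k
  + vact n z x * (V x *m gam x) 0 j.
Proof.
transitivity (\sum_k \sum_i n x 0 i * ((z x *: V x) 0 k * dg k i j
      + gam x k j * pd i (fun y => (z y *: V y) 0 k) x
      + gam x i k * pd j (fun y => (z y *: V y) 0 k) x)).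
  rewrite exchange_big /=; apply: eq_bigr => i _; rewrite [X in _ * X = _]mxE mulr_sumr.
  by apply: eq_bigr.
transitivity (\sum_k (z x * V x 0 k * (- \sum_i gam x i j * dn k i)
    + z x * gam x k j * cV k + gam x k j * V x 0 k * vact n z x)).
  apply: eq_bigr => k _.
  rewrite (@sum4 _ (fun i => n x 0 i * dg k i j) (fun i => n x 0 i * dV i k)
     (fun i => n x 0 i * Z i) (fun i => n x 0 i * gam x i k)
     (z x * V x 0 k) (z x * gam x k j) (gam x k j * V x 0 k) (z x * dV j k + V x 0 k * Z j)).
    rewrite I3 I1 /vact mulr0 addr0.
    genat; ring.
  move=> i; rewrite hdzV hdzV !mxE.
  genat; ring.
rewrite big_split big_split /=.
have ea : \sum_i z x * V x 0 i * - \sum_i0 gam x i0 j * dn i i0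
    = - (z x * \sum_k gam x k j * en k).
  transitivity (\sum_i \sum_i0 (- z x * gam x i0 j) * (V x 0 i * dn i i0)).
    apply: eq_bigr => i _; rewrite mulrN mulr_sumr -sumrN; apply: eq_bigr => i0 _.
    genat; ring.
  rewrite exchange_big /= (@sum1 _ (fun k => gam x k j * en k) (- z x)); first by ring.
  move=> k; rewrite (@sum1 _ (fun a => V x 0 a * dn a k) (- z x * gam x k j)); first by ring.
  by [].
have eb : \sum_i z x * gam x i j * cV i = z x * \sum_a gam x a j * cV a.
  by rewrite mulr_sumr; apply: eq_bigr => i _; rewrite mulrA.
have ec : \sum_i gam x i j * V x 0 i * vact n z x = vact n z x * (V x *m gam x) 0 j.
  rewrite mxE mulr_sumr; apply: eq_bigr => i _; ring.
rewrite ea eb ec; genat; ring.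
Qed.

Lemma hQ j : (n x *m Y' x) 0 j = z x * (n x *m Y x) 0 j + 2^-1 * Z j + 2^-1 * (vact n z x * ell x 0 j)
   + 2^-1 * (z x * \sum_a gam x a j * cV a - z x * \sum_k gam x k j * en k
             + vact n z x * (V x *m gam x) 0 j).
Proof.
rewrite [LHS]mxE.
rewrite (@sum4 _ (fun i => n x 0 i * Y x i j) (fun i => ell x 0 i * n x 0 i) (fun i => n x 0 i * Z i)
   (fun i => n x 0 i * lie2 (fun y => z y *: V y) gam x i j) (z x) (2^-1 * Z j) (2^-1 * ell x 0 j) 2^-1).
  rewrite hNL I2 [in RHS]mxE /vact.
  genat; ring.
move=> i; rewrite /gauge_Y /symtens !mxE !big_ord1 !mxE.
genat; ring.
Qed.

Lemma dsplit3 (f g h : 'I_m -> 'I_m -> R) :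
  \sum_k \sum_a (f k a + g k a + h k a) =
  \sum_k \sum_a f k a + \sum_k \sum_a g k a + \sum_k \sum_a h k a.
Proof. by under eq_bigr do rewrite !big_split; rewrite !big_split. Qed.

Lemma dswap (f g : 'I_m -> 'I_m -> R) : (forall k a, f k a = g a k) ->
  \sum_k \sum_a f k a = \sum_k \sum_a g k a.
Proof. by move=> h; rewrite exchange_big; apply: eq_bigr => a _; apply: eq_bigr => k _. Qed.

Lemma dfact (c : 'I_m -> R) (f : 'I_m -> 'I_m -> R) :
  \sum_a c a * \sum_k f a k = \sum_a \sum_k c a * f a k.
Proof. by apply: eq_bigr => a _; rewrite mulr_sumr. Qed.

Lemma comb (s1 s2 s3 s4 s5 s6 t1 t2 : R) : s4 = s1 -> s6 = s3 -> t1 = s2 -> t2 = s5 ->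
  s1 + s2 + s3 - (s4 + s5 + s6) = t1 - t2.
Proof. by move=> -> -> -> ->; ring. Qed.

Lemma two0 : (2 : R) != 0.
Proof. by rewrite pnatr_eq0. Qed.

Lemma hLU j : lie1 n w x 0 j - 2 * (V x *m Uten gam ell ell2 x) 0 j =
   \sum_a gam x a j * cV a - \sum_k gam x k j * en k.
Proof.
have L1 : lie1 n w x 0 j = \sum_k \sum_a (n x 0 k * V x 0 a * dg k a j
       + n x 0 k * gam x a j * dV k a + V x 0 a * gam x a k * dn j k).
  rewrite mxE; apply: eq_bigr => k _; cbv beta.
  rewrite hdw [(V x *m gam x) 0 k]mxE mulr_sumr mulr_suml -!big_split /=; apply: eq_bigr => a _.
  genat; ring.
have U1 : 2 * (V x *m Uten gam ell ell2 x) 0 j = \sum_k \sum_a (V x 0 k * n x 0 a * dg a k j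
       + V x 0 k * gam x a j * dn k a + V x 0 k * gam x k a * dn j a).
  rewrite [(V x *m _) 0 j]mxE mulr_sumr; apply: eq_bigr => k _.
  rewrite /Uten mxE mxE.
  rewrite [RHS](@sum1 _ (fun a => n x 0 a * dg a k j + gam x a j * dn k a + gam x k a * dn j a) (V x 0 k)).
    move: two0; genat => t0; by field.
  move=> a; genat; ring.
rewrite L1 U1 !dsplit3.
have e1 : \sum_k \sum_a V x 0 k * n x 0 a * dg a k j = \sum_k \sum_a n x 0 k * V x 0 a * dg k a j.
  apply: dswap => k a; genat; ring.
have e3 : \sum_k \sum_a V x 0 k * gam x k a * dn j a = \sum_k \sum_a V x 0 a * gam x a k * dn j k.
  by apply: dswap.
have e2 : \sum_a gam x a j * cV a = \sum_k \sum_a n x 0 k * gam x a j * dV k a.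
  rewrite dfact; apply: dswap => a k; genat; ring.
have e4 : \sum_k gam x k j * en k = \sum_k \sum_a V x 0 k * gam x a j * dn k a.
  rewrite dfact; apply: dswap => a k; genat; ring.
apply: comb; [exact: e1 | exact: e3 | exact: e2 | exact: e4].
Qed.

Lemma hn'M : n' x = (z x)^-1 *: n x.
Proof. by apply/rowP => k; rewrite [RHS]mxE hn'. Qed.

Lemma goalR : rform gam ell' ell2' Y' x = rform gam ell ell2 Y x + (2 * z x)^-1 *: dfun z x
                      + (vact n z x / (2 * z x)) *: (ell x + w x)
                      + 2^-1 *: lie1 n w x - V x *m Uten gam ell ell2 x.
Proof.
rewrite /rform hn'M -scalemxAl; apply/rowP => j.
rewrite [LHS]mxE hQ.
move: (hLU j); move: (lie1 n w x) (V x *m Uten gam ell ell2 x) => Lm VU hL.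
have eL : Lm 0 j = (\sum_a gam x a j * cV a - \sum_k gam x k j * en k) + 2 * VU 0 j.
  by rewrite -hL; genat; ring.
rewrite !mxE eL; cbv beta.
move: (z x) z0 two0 => q q0 t0; genat; by field.
Qed.

Lemma zero_g (c : 'I_m -> R) : \sum_j (\sum_a gam x a j * c a) * n x 0 j = 0.
Proof.
under eq_bigr do rewrite mulr_suml.
rewrite exchange_big /=; apply: big1 => a _.
rewrite (@sum1 _ (fun j => n x 0 j * gam x j a) (c a)); first by rewrite I1 mulr0.
by move=> j; rewrite (gsx a j); genat; ring.
Qed.

Lemma goalK : kappan gam ell' ell2' Y' x = (z x)^-1 * (kappan gam ell ell2 Y x - vact n z x / z x).
Proof.
rewrite /kappan hn'M trZ -scalemxAl -scalemxAr -scalemxAl scalerA [in LHS]mxE.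
have hK1 : (n x *m Y x *m (n x)^T) 0 0 = \sum_j (n x *m Y x) 0 j * n x 0 j.
  by rewrite [LHS]mxE; apply: eq_bigr => j _; rewrite [(n x)^T j 0]mxE.
rewrite hK1 [(n x *m Y' x *m _) 0 0]mxE.
have -> : \sum_j (n x *m Y' x) 0 j * (n x)^T j 0 =
   z x * \sum_j (n x *m Y x) 0 j * n x 0 j + 2^-1 * \sum_j n x 0 j * Z j
   + 2^-1 * vact n z x * \sum_j ell x 0 j * n x 0 j
   + 2^-1 * z x * \sum_j (\sum_a gam x a j * cV a) * n x 0 j
   - 2^-1 * z x * \sum_j (\sum_k gam x k j * en k) * n x 0 j
   + 2^-1 * vact n z x * \sum_j n x 0 j * (V x *m gam x) 0 j.
  rewrite (@sum6 _ (fun j => (n x *m Y x) 0 j * n x 0 j) (fun j => n x 0 j * Z j)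
     (fun j => ell x 0 j * n x 0 j) (fun j => (\sum_a gam x a j * cV a) * n x 0 j)
     (fun j => (\sum_k gam x k j * en k) * n x 0 j) (fun j => n x 0 j * (V x *m gam x) 0 j)
     (z x) 2^-1 (2^-1 * vact n z x) (2^-1 * z x) (- (2^-1 * z x)) (2^-1 * vact n z x)).
    by genat; ring.
  move=> j; rewrite hQ [(n x)^T j 0]mxE.
  genat; ring.
rewrite I2 I5 !zero_g /vact.
move: (z x) z0 two0 => q q0 t0; genat; by field.
Qed.
End Main.

Section Fin.
Context {R : realType} {m : nat} {x : 'rV[R]_m}.

Lemma dvb_sm (Uo : set 'rV[R]_m) f : smooth_on Uo f -> Uo x -> dvb x f.
Proof. by move=> sf Ux k; exact: ((sf 1%N).2 k).1 x Ux. Qed.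

Lemma dvb_Amat (g : 'rV[R]_m -> 'M[R]_m) (l : 'rV[R]_m -> 'rV[R]_m) (l2 : 'rV[R]_m -> R) :
  (forall i j, dvb x (fun y => g y i j)) -> (forall j, dvb x (fun y => l y 0 j)) -> dvb x l2 ->
  forall i j, dvb x (fun y => Amat (g y) (l y) (l2 y) i j).
Proof.
move=> dg dl dl2 i j; rewrite -(splitK i) -(splitK j).
case: (fintype.split i) => i'; case: (fintype.split j) => j' /=.
- by under eq_fun do rewrite /Amat block_mxEul; exact: dg.
- rewrite (ord1 j'); under eq_fun do rewrite /Amat block_mxEur mxE; exact: dl.
- rewrite (ord1 i'); under eq_fun do rewrite /Amat block_mxEdl; exact: dl.
- rewrite (ord1 i') (ord1 j'); under eq_fun do rewrite /Amat block_mxEdr mxE eqxx mulr1n; exact: dl2.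
Qed.
End Fin.

Theorem lemma3p6 (R : realType) (m : nat) (Uo : set 'rV[R]_m)
  (gam : 'rV[R]_m -> 'M[R]_m) (ell : 'rV[R]_m -> 'rV[R]_m) (ell2 : 'rV[R]_m -> R)
  (Y : 'rV[R]_m -> 'M[R]_m) (z : 'rV[R]_m -> R) (V : 'rV[R]_m -> 'rV[R]_m) :
  open Uo ->
  (forall i j, smooth_on Uo (fun x => gam x i j)) ->
  (forall i, smooth_on Uo (fun x => ell x 0 i)) ->
  smooth_on Uo ell2 ->
  (forall i j, smooth_on Uo (fun x => Y x i j)) ->
  smooth_on Uo z ->
  (forall i, smooth_on Uo (fun x => V x 0 i)) ->
  (forall x, Uo x -> (gam x)^T = gam x) ->
  (forall x, Uo x -> (Y x)^T = Y x) ->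
  (forall x, Uo x -> Amat (gam x) (ell x) (ell2 x) \in unitmx) ->
  (forall x, Uo x -> n2field gam ell ell2 x = 0) ->
  (forall x, Uo x -> z x != 0) ->
  let w := fun x => V x *m gam x in
  let n := nfield gam ell ell2 in
  let ell' := gauge_ell z V gam ell in
  let ell2' := gauge_ell2 z V gam ell ell2 in
  let Y' := gauge_Y z V gam ell Y in
  forall x, Uo x ->
    [/\ Uten gam ell' ell2' x = (z x)^-1 *: Uten gam ell ell2 x,
        Ften ell' x = z x *: (Ften ell x + 2^-1 *: dform w x)
                      + 2^-1 *: wedge (dfun z x) (ell x + w x),
        sform gam ell' ell2' x = sform gam ell ell2 x + 2^-1 *: lie1 n w x
                      + (vact n z x / (2 * z x)) *: (ell x + w x)
                      - (2 * z x)^-1 *: dfun z x,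
        rform gam ell' ell2' Y' x = rform gam ell ell2 Y x + (2 * z x)^-1 *: dfun z x
                      + (vact n z x / (2 * z x)) *: (ell x + w x)
                      + 2^-1 *: lie1 n w x - V x *m Uten gam ell ell2 x
      & kappan gam ell' ell2' Y' x = (z x)^-1 * (kappan gam ell ell2 Y x - vact n z x / z x)].
Proof.
move=> oU sG sL sL2 sY sZ sV gsym Ysym uA n20 z0 w n ell' ell2' Y' x Ux.
have nb : \forall y \near x, Uo y by apply: open_nbhs_nbhs; split.
have I1y : forall y, Uo y -> forall j, \sum_k n y 0 k * gam y k j = 0.
  by move=> y Uy; exact: (@inv_facts _ _ _ _ _ (gsym y Uy) (uA y Uy) (n20 y Uy)).1.
have I2y : forall y, Uo y -> \sum_k ell y 0 k * n y 0 k = 1.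
  by move=> y Uy; exact: (@inv_facts _ _ _ _ _ (gsym y Uy) (uA y Uy) (n20 y Uy)).2.
have hn'y : forall y, Uo y -> forall k, nfield gam ell' ell2' y 0 k = (z y)^-1 * n y 0 k.
  move=> y Uy k.
  have := (@gauge_inv _ _ _ _ _ _ (V y) (gsym y Uy) (uA y Uy) (n20 y Uy) (z0 y Uy)).2.
  by move/rowP/(_ k); rewrite [in RHS]mxE.
have gsy : forall y, Uo y -> forall i j, gam y i j = gam y j i.
  by move=> y Uy i j; rewrite -[in LHS](gsym y Uy) mxE.
have I5y : forall y, Uo y -> \sum_k n y 0 k * (V y *m gam y) 0 k = 0.
  move=> y Uy.
  transitivity (\sum_k \sum_a V y 0 a * (n y 0 k * gam y k a)).
    apply: eq_bigr => k _; rewrite [(V y *m gam y) 0 k]mxE mulr_sumr; apply: eq_bigr => a _.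
    by rewrite (gsy y Uy a k) mulrCA.
  rewrite exchange_big /=; apply: big1 => a _.
  by rewrite -mulr_sumr I1y // mulr0.
have z0x := z0 x Ux.
have dZ : dvb x z := @dvb_sm _ _ x _ _ sZ Ux.
have dL : forall j, dvb x (fun y => ell y 0 j) := fun j => @dvb_sm _ _ x _ _ (sL j) Ux.
have dL2 : dvb x ell2 := @dvb_sm _ _ x _ _ sL2 Ux.
have dG : forall a b, dvb x (fun y => gam y a b) := fun a b => @dvb_sm _ _ x _ _ (sG a b) Ux.
have dVv : forall a, dvb x (fun y => V y 0 a) := fun a => @dvb_sm _ _ x _ _ (sV a) Ux.
have dN : forall k, dvb x (fun y => n y 0 k).
  move=> k.
  have -> : (fun y => n y 0 k) = fun y => invmx (Amat (gam y) (ell y) (ell2 y)) (lshift 1 k) (rshift m ord0).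
    by apply: funext => y; rewrite /n /nfield /nvec mxE.
  exact: (@dvb_inv_entry _ _ x _ (fun y => Amat (gam y) (ell y) (ell2 y)) Uo (lshift 1 k) (rshift m ord0)
            oU Ux uA (@dvb_Amat _ _ x gam ell ell2 dG dL dL2)).
have dW : forall j, dvb x (fun y => (V y *m gam y) 0 j).
  move=> j.
  have -> : (fun y => (V y *m gam y) 0 j) = fun y => \sum_a V y 0 a * gam y a j.
    by apply: funext => y; rewrite mxE.
  by apply: dvb_sum => a; exact: (dvbM (dVv a) (dG a j)).
have I1 := I1y x Ux.
have I2 := I2y x Ux.
have I5 := I5y x Ux.
have gsx := gsy x Ux.
have hn' := hn'y x Ux.
have hdn' : forall i k, pd i (fun y => nfield gam ell' ell2' y 0 k) x =
   (z x)^-1 * pd i (fun y => n y 0 k) x + n x 0 k * (- (z x)^-2 * pd i z x).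
  move=> i k.
  rewrite (@pd_near _ _ x (fun y => nfield gam ell' ell2' y 0 k) (fun y => (z y)^-1 * n y 0 k) i); last first.
    by apply: (filterS _ nb) => y Uy; exact: hn'y.
  rewrite (@pdM _ _ x (fun y => (z y)^-1) (fun y => n y 0 k) i (dvbV z0x dZ) (dN k)).
  by rewrite (@pdV _ _ x z i z0x dZ).
have I3 : forall k j, \sum_i n x 0 i * pd k (fun y => gam y i j) x
     = - \sum_i gam x i j * pd k (fun y => n y 0 i) x.
  move=> k j.
  have h0 : \sum_i (n x 0 i * pd k (fun y => gam y i j) x + gam x i j * pd k (fun y => n y 0 i) x) = 0.
    transitivity (pd k (fun y => \sum_i n y 0 i * gam y i j) x).
      rewrite (@pd_sum _ _ x _ (index_enum _) xpredT (fun i y => n y 0 i * gam y i j) k); last first.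
        by move=> i; exact: (dvbM (dN i) (dG i j)).
      apply: eq_bigr => i _; symmetry.
      exact: (@pdM _ _ x (fun y => n y 0 i) (fun y => gam y i j) k (dN i) (dG i j)).
    rewrite (@pd_near _ _ x _ (fun _ => 0) k) ?pdC //.
    by apply: (filterS _ nb) => y Uy; exact: I1y.
  by move: h0; rewrite big_split /= => /eqP; rewrite addr_eq0 => /eqP.
have I4 : forall j, \sum_k (V x *m gam x) 0 k * pd j (fun y => n y 0 k) x =
   - \sum_k n x 0 k * pd j (fun y => (V y *m gam y) 0 k) x.
  move=> j.
  have h0 : \sum_k (n x 0 k * pd j (fun y => (V y *m gam y) 0 k) x + (V x *m gam x) 0 k * pd j (fun y => n y 0 k) x) = 0.
    transitivity (pd j (fun y => \sum_k n y 0 k * (V y *m gam y) 0 k) x).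
      rewrite (@pd_sum _ _ x _ (index_enum _) xpredT (fun k y => n y 0 k * (V y *m gam y) 0 k) j); last first.
        by move=> k; exact: (dvbM (dN k) (dW k)).
      apply: eq_bigr => k _; symmetry.
      exact: (@pdM _ _ x (fun y => n y 0 k) (fun y => (V y *m gam y) 0 k) j (dN k) (dW k)).
    rewrite (@pd_near _ _ x _ (fun _ => 0) j) ?pdC //.
    by apply: (filterS _ nb) => y Uy; exact: I5y.
  by move: h0; rewrite big_split /= addrC => /eqP; rewrite addr_eq0 => /eqP.
split.
- apply: goalU; assumption.
- apply: goalF; assumption.
- apply: goalS; assumption.
- apply: goalR; assumption.
- apply: goalK; assumption.
Qed.
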